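(* Let $\langle X_0,d_0\rangle$ and $\langle X_1,d_1\rangle$ be metric spaces. Then $\langle X_0,d_0\rangle$ and $\langle X_1,d_1\rangle$ have isometrically isomorphic completions if and only if there exist a cardinal $\eta\leq|X_0|+|X_1|$, a metric $d$ on $\eta$, and, for each $e\in\{0,1\}$, a dense isometry $\iota_e:\langle X_e,d_e\rangle\to\langle\eta,d\rangle$.
   Context: An isometry between metric spaces is a distance-preserving map (not necessarily onto); an isometrical isomorphism is an onto isometry; a dense isometry $\iota:X\to X'$ is an isometry with $\iota[X]$ dense in $X'$. A completion of a metric space $\langle X,d\rangle$ is a triple $\langle X^*,d^*,\iota\rangle$ with $\langle X^*,d^*\rangle$ complete and $\iota:\langle X,d\rangle\to\langle X^*,d^*\rangle$ a dense isometry. *)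

(* Defs.v *)
From Stdlib Require Import Reals.
Open Scope R_scope.

Definition is_metric (X : Type) (d : X -> X -> R) : Prop :=
  (forall x y, 0 <= d x y) /\
  (forall x y, d x y = 0 <-> x = y) /\
  (forall x y, d x y = d y x) /\
  (forall x y z, d x z <= d x y + d y z).

Definition cauchy_seq (X : Type) (d : X -> X -> R) (u : nat -> X) : Prop :=
  forall eps, 0 < eps -> exists N, forall m n, (N <= m)%nat -> (N <= n)%nat ->
    d (u m) (u n) < eps.

Definition converges_to (X : Type) (d : X -> X -> R) (u : nat -> X) (l : X) : Prop :=
  forall eps, 0 < eps -> exists N, forall n, (N <= n)%nat -> d (u n) l < eps.

Definition complete_metric (X : Type) (d : X -> X -> R) : Prop :=
  is_metric X d /\
  forall u : nat -> X, cauchy_seq X d u -> exists l, converges_to X d u l.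

Definition isometry (X Y : Type) (dX : X -> X -> R) (dY : Y -> Y -> R)
  (f : X -> Y) : Prop :=
  forall x y, dY (f x) (f y) = dX x y.

Definition isometric_iso (X Y : Type) (dX : X -> X -> R) (dY : Y -> Y -> R)
  (f : X -> Y) : Prop :=
  isometry X Y dX dY f /\ (forall y, exists x, f x = y).

Definition dense_isometry (X Y : Type) (dX : X -> X -> R) (dY : Y -> Y -> R)
  (f : X -> Y) : Prop :=
  isometry X Y dX dY f /\
  (forall y eps, 0 < eps -> exists x, dY (f x) y < eps).

Definition completion (X Y : Type) (dX : X -> X -> R) (dY : Y -> Y -> R)
  (i : X -> Y) : Prop :=
  complete_metric Y dY /\ dense_isometry X Y dX dY i.

Definition card_le_sum (Y X0 X1 : Type) : Prop :=
  exists f : Y -> X0 + X1, forall a b, f a = f b -> a = b.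

(* Main.v *)
Require Import Defs.
From Stdlib Require Import Reals Lra Lia ClassicalEpsilon ProofIrrelevance FunctionalExtensionality PropExtensionality.
Open Scope R_scope.

Definition limR (u : nat -> R) : R := epsilon (inhabits 0) (fun l => Un_cv u l).

Lemma limR_eq u l : Un_cv u l -> limR u = l.
Proof. intro H. apply (UL_sequence u); [|exact H]. unfold limR. apply epsilon_spec. eauto. Qed.

Lemma cv_le_ev a l c : Un_cv a l -> (exists N, forall n, (N<=n)%nat -> a n <= c) -> l <= c.
Proof.
 intros H [N HN]. destruct (Rle_or_lt l c) as [h|h]; auto.
 destruct (H (l - c)) as [M HM]; [lra|].
 specialize (HM (max N M) ltac:(lia)). specialize (HN (max N M) ltac:(lia)).
 unfold Rdist in HM. apply Rabs_def2 in HM. lra.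
Qed.

Lemma cv_ge_ev a l c : Un_cv a l -> (exists N, forall n, (N<=n)%nat -> c <= a n) -> c <= l.
Proof.
 intros H [N HN]. destruct (Rle_or_lt c l) as [h|h]; auto.
 destruct (H (c - l)) as [M HM]; [lra|].
 specialize (HM (max N M) ltac:(lia)). specialize (HN (max N M) ltac:(lia)).
 unfold Rdist in HM. apply Rabs_def2 in HM. lra.
Qed.

Lemma cv_ev_close a b l : Un_cv a l ->
  (forall eps, 0<eps -> exists N, forall n, (N<=n)%nat -> Rabs (a n - b n) < eps) -> Un_cv b l.
Proof.
 intros H H2 eps he. destruct (H (eps/2)) as [N1 h1]; [lra|].
 destruct (H2 (eps/2)) as [N2 h2]; [lra|]. exists (max N1 N2). intros n hn.
 specialize (h1 n ltac:(lia)). specialize (h2 n ltac:(lia)). unfold Rdist in *.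
 apply Rabs_def2 in h1. apply Rabs_def2 in h2. apply Rabs_def1; lra.
Qed.

Lemma cv_const c : Un_cv (fun _ => c) c.
Proof. intros eps he. exists O. intros. unfold Rdist. rewrite Rminus_diag, Rabs_R0. lra. Qed.

Lemma d_quad Z d (hd: is_metric Z d) a b a' b' : Rabs (d a b - d a' b') <= d a a' + d b b'.
Proof.
 destruct hd as [h0 [h1 [hs ht]]].
 pose proof (ht a a' b). pose proof (ht a' b' b). pose proof (ht a' a b'). pose proof (ht a b b').
 pose proof (hs b' b). pose proof (hs a' a). apply Rabs_le. lra.
Qed.

Lemma d_refl Z d (hd: is_metric Z d) x : d x x = 0.
Proof. destruct hd as [h0 [h1 _]]. apply h1. reflexivity. Qed.

Definition equivS Z (d:Z->Z->R) (u v : nat -> Z) : Prop :=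
  forall eps, 0 < eps -> exists N, forall n, (N <= n)%nat -> d (u n) (v n) < eps.

Lemma equivS_refl Z d (hd: is_metric Z d) u : equivS Z d u u.
Proof. intros eps he. exists O. intros. rewrite (d_refl Z d hd). lra. Qed.

Lemma equivS_sym Z d (hd: is_metric Z d) u v : equivS Z d u v -> equivS Z d v u.
Proof. intros H eps he. destruct (H eps he) as [N hN]. exists N. intros n hn.
 destruct hd as [_ [_ [hs _]]]. rewrite hs. auto. Qed.

Lemma equivS_trans Z d (hd: is_metric Z d) u v w : equivS Z d u v -> equivS Z d v w -> equivS Z d u w.
Proof. intros H1 H2 eps he. destruct (H1 (eps/2)) as [N1 h1]; [lra|].
 destruct (H2 (eps/2)) as [N2 h2]; [lra|]. exists (max N1 N2). intros n hn.
 specialize (h1 n ltac:(lia)). specialize (h2 n ltac:(lia)).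
 destruct hd as [_ [_ [_ ht]]]. pose proof (ht (u n) (v n) (w n)). lra. Qed.

Lemma cls_eq Z d (hd: is_metric Z d) u v : equivS Z d u v -> equivS Z d u = equivS Z d v.
Proof. intro H. apply functional_extensionality. intro w. apply propositional_extensionality.
 split; intro H'. - eapply equivS_trans; [eauto| |exact H']. apply equivS_sym; auto.
 - eapply equivS_trans; eauto. Qed.

Lemma cauchy_equiv Z d (hd: is_metric Z d) u v : cauchy_seq Z d u -> equivS Z d u v -> cauchy_seq Z d v.
Proof. intros H1 H2 eps he. destruct (H1 (eps/3)) as [N1 h1]; [lra|].
 destruct (H2 (eps/3)) as [N2 h2]; [lra|]. exists (max N1 N2). intros m n hm hn.
 specialize (h1 m n ltac:(lia) ltac:(lia)). pose proof (h2 m ltac:(lia)). pose proof (h2 n ltac:(lia)).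
 destruct hd as [_ [_ [hs ht]]]. pose proof (ht (v m) (u m) (v n)). pose proof (ht (u m) (u n) (v n)).
 pose proof (hs (v m) (u m)). lra. Qed.

Definition CY Z d := {P : (nat -> Z) -> Prop | exists u, cauchy_seq Z d u /\ P = equivS Z d u}.

Definition rep Z d (P : CY Z d) : nat -> Z :=
  proj1_sig (constructive_indefinite_description _ (proj2_sig P)).

Lemma repP Z d (P : CY Z d) : cauchy_seq Z d (rep Z d P) /\ proj1_sig P = equivS Z d (rep Z d P).
Proof. unfold rep. destruct (constructive_indefinite_description _ _). simpl. auto. Qed.

Lemma cauchy_crit_d Z d (hd: is_metric Z d) u v : cauchy_seq Z d u -> cauchy_seq Z d v ->
  Cauchy_crit (fun n => d (u n) (v n)).
Proof. intros H1 H2 eps he. destruct (H1 (eps/2)) as [N1 h1]; [lra|].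
 destruct (H2 (eps/2)) as [N2 h2]; [lra|]. exists (max N1 N2). intros m n hm hn.
 specialize (h1 m n ltac:(lia) ltac:(lia)). specialize (h2 m n ltac:(lia) ltac:(lia)).
 unfold Rdist. pose proof (d_quad Z d hd (u m) (v m) (u n) (v n)). lra. Qed.

Definition dist Z d (P Q : CY Z d) : R := limR (fun n => d (rep Z d P n) (rep Z d Q n)).

Lemma dist_spec Z d (hd: is_metric Z d) (P Q : CY Z d) u v :
  equivS Z d (rep Z d P) u -> equivS Z d (rep Z d Q) v ->
  Un_cv (fun n => d (u n) (v n)) (dist Z d P Q).
Proof.
 intros HP HQ. destruct (repP Z d P) as [cP _]. destruct (repP Z d Q) as [cQ _].
 destruct (R_complete _ (cauchy_crit_d Z d hd _ _ cP cQ)) as [l hl].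
 unfold dist. rewrite (limR_eq _ _ hl). apply (cv_ev_close _ _ _ hl).
 intros eps he. destruct (HP (eps/2)) as [N1 h1]; [lra|].
 destruct (HQ (eps/2)) as [N2 h2]; [lra|]. exists (max N1 N2). intros n hn.
 specialize (h1 n ltac:(lia)). specialize (h2 n ltac:(lia)).
 pose proof (d_quad Z d hd (rep Z d P n) (rep Z d Q n) (u n) (v n)). lra.
Qed.

Lemma in_rep Z d (hd: is_metric Z d) (P : CY Z d) u : proj1_sig P u -> equivS Z d (rep Z d P) u.
Proof. destruct (repP Z d P) as [_ e]. rewrite e. auto. Qed.

Lemma CY_eq Z d (P Q : CY Z d) : proj1_sig P = proj1_sig Q -> P = Q.
Proof. destruct P as [p hp], Q as [q hq]. simpl. intros ->. f_equal. apply proof_irrelevance. Qed.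

Lemma dist_metric Z d (hd: is_metric Z d) : is_metric (CY Z d) (dist Z d).
Proof.
 assert (E : forall P : CY Z d, equivS Z d (rep Z d P) (rep Z d P)) by (intro; apply equivS_refl; auto).
 split; [|split; [|split]].
 - intros P Q. apply (cv_ge_ev _ _ _ (dist_spec Z d hd P Q _ _ (E P) (E Q))).
   exists O. intros. destruct hd; auto.
 - intros P Q. split.
   + intro H0. apply CY_eq. rewrite (proj2 (repP Z d P)), (proj2 (repP Z d Q)).
     apply cls_eq; auto. intros eps he.
     destruct (dist_spec Z d hd P Q _ _ (E P) (E Q) eps he) as [N hN]. exists N. intros n hn.
     specialize (hN n hn). unfold Rdist in hN. rewrite H0, Rminus_0_r in hN.
     apply Rabs_def2 in hN. lra.
   + intros <-. apply (UL_sequence (fun n => d (rep Z d P n) (rep Z d P n))).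
     * apply dist_spec; auto.
     * eapply cv_ev_close; [apply (cv_const 0)|]. intros eps he. exists O. intros.
       rewrite (d_refl Z d hd). rewrite Rminus_0_r, Rabs_R0. auto.
 - intros P Q. apply (UL_sequence (fun n => d (rep Z d P n) (rep Z d Q n))).
   * apply dist_spec; auto.
   * eapply cv_ev_close; [apply (dist_spec Z d hd Q P _ _ (E Q) (E P))|].
     intros eps he. exists O. intros. destruct hd as [_ [_ [hs _]]]. rewrite hs, Rminus_diag, Rabs_R0. auto.
 - intros P Q W.
   pose proof (dist_spec Z d hd P W _ _ (E P) (E W)) as a.
   pose proof (CV_plus _ _ _ _ (dist_spec Z d hd P Q _ _ (E P) (E Q)) (dist_spec Z d hd Q W _ _ (E Q) (E W))) as b.
   exact (Rle_cv_lim (fun n => proj2 (proj2 (proj2 hd)) _ _ _) a b).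
Qed.
Definition mkC Z d (u : nat -> Z) (hu : cauchy_seq Z d u) : CY Z d :=
  exist _ (equivS Z d u) (ex_intro _ u (conj hu eq_refl)).

Lemma rep_mkC Z d (hd: is_metric Z d) u hu : equivS Z d (rep Z d (mkC Z d u hu)) u.
Proof. apply in_rep; auto. simpl. apply equivS_refl; auto. Qed.

Lemma const_cauchy Z d (hd: is_metric Z d) x : cauchy_seq Z d (fun _ => x).
Proof. intros eps he. exists O. intros. rewrite (d_refl Z d hd). lra. Qed.

Definition jC Z d (hd: is_metric Z d) x := mkC Z d (fun _ => x) (const_cauchy Z d hd x).

Lemma jC_iso Z d (hd: is_metric Z d) : isometry Z (CY Z d) d (dist Z d) (jC Z d hd).
Proof. intros x y. apply (UL_sequence (fun _ => d x y)).
 - apply dist_spec; auto; apply rep_mkC; auto.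
 - apply cv_const. Qed.

Lemma jC_dense Z d (hd: is_metric Z d) : dense_isometry Z (CY Z d) d (dist Z d) (jC Z d hd).
Proof. split; [apply jC_iso|]. intros P eps he.
 destruct (repP Z d P) as [cP _]. destruct (cP (eps/2)) as [N hN]; [lra|].
 exists (rep Z d P N).
 pose proof (dist_spec Z d hd (jC Z d hd (rep Z d P N)) P (fun _ => rep Z d P N) (rep Z d P)
   (rep_mkC Z d hd _ _) (equivS_refl Z d hd _)) as h.
 assert (dist Z d (jC Z d hd (rep Z d P N)) P <= eps/2); [|lra].
 apply (cv_le_ev _ _ _ h). exists N. intros n hn. left. apply hN; lia.
Qed.

Lemma CY_complete Z d (hd: is_metric Z d) : complete_metric (CY Z d) (dist Z d).
Proof.
 pose proof (dist_metric Z d hd) as hm. split; [exact hm|].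
 destruct hm as [m0 [m1 [ms mt]]].
 intros P hP.
 assert (Hz : exists z : nat -> Z, forall k, dist Z d (jC Z d hd (z k)) (P k) < / INR (S k)).
 { assert (H : forall k, exists x, dist Z d (jC Z d hd x) (P k) < / INR (S k)).
   { intro k. apply (proj2 (jC_dense Z d hd)). apply Rinv_0_lt_compat, lt_0_INR. lia. }
   exists (fun k => proj1_sig (constructive_indefinite_description _ (H k))).
   intro k. destruct (constructive_indefinite_description _ (H k)). auto. }
 destruct Hz as [z hz].
 assert (small : forall eps, 0 < eps -> exists K, forall k, (K <= k)%nat -> / INR (S k) < eps).
 { intros eps he. destruct (archimed_cor1 eps he) as [K [h1 h2]]. exists K. intros k hk.
   eapply Rle_lt_trans; [|exact h1]. apply Rinv_le_contravar.
   - apply lt_0_INR; lia.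
   - apply le_INR; lia. }
 assert (cz : cauchy_seq Z d z).
 { intros eps he. destruct (small (eps/3)) as [K hK]; [lra|].
   destruct (hP (eps/3)) as [N hN]; [lra|]. exists (max K N). intros m n hm hn.
   rewrite <- (jC_iso Z d hd).
   pose proof (mt (jC Z d hd (z m)) (P m) (jC Z d hd (z n))).
   pose proof (mt (P m) (P n) (jC Z d hd (z n))).
   pose proof (hz m). pose proof (hz n). pose proof (hK m ltac:(lia)). pose proof (hK n ltac:(lia)).
   pose proof (hN m n ltac:(lia) ltac:(lia)). pose proof (ms (P n) (jC Z d hd (z n))). lra. }
 exists (mkC Z d z cz). intros eps he.
 destruct (small (eps/3)) as [K hK]; [lra|].
 destruct (cz (eps/3)) as [N hN]; [lra|]. exists (max K N). intros k hk.
 pose proof (dist_spec Z d hd (jC Z d hd (z k)) (mkC Z d z cz) (fun _ => z k) z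
   (rep_mkC Z d hd _ _) (rep_mkC Z d hd _ _)) as h.
 assert (dist Z d (jC Z d hd (z k)) (mkC Z d z cz) <= eps/3).
 { apply (cv_le_ev _ _ _ h). exists N. intros n hn. left. apply hN; lia. }
 pose proof (mt (P k) (jC Z d hd (z k)) (mkC Z d z cz)).
 pose proof (hz k). pose proof (hK k ltac:(lia)). pose proof (ms (P k) (jC Z d hd (z k))). lra.
Qed.

Lemma compose_dense X Y W dX dY dW f g (hW: is_metric W dW) :
  dense_isometry X Y dX dY f -> dense_isometry Y W dY dW g ->
  dense_isometry X W dX dW (fun x => g (f x)).
Proof.
 intros [if_ df] [ig dg]. split.
 - intros x y. rewrite ig. apply if_.
 - intros w eps he. destruct (dg w (eps/2)) as [y hy]; [lra|].
   destruct (df y (eps/2)) as [x hx]; [lra|]. exists x.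
   pose proof (proj2 (proj2 (proj2 hW)) (g (f x)) (g y) w). rewrite ig in H. lra.
Qed.

Theorem lemma3p3 (X0 X1 : Type) (d0 : X0 -> X0 -> R) (d1 : X1 -> X1 -> R)
  (hd0 : is_metric X0 d0) (hd1 : is_metric X1 d1) :
  (exists (Y0 : Type) (e0 : Y0 -> Y0 -> R) (j0 : X0 -> Y0)
          (Y1 : Type) (e1 : Y1 -> Y1 -> R) (j1 : X1 -> Y1) (phi : Y0 -> Y1),
      completion X0 Y0 d0 e0 j0 /\ completion X1 Y1 d1 e1 j1 /\
      isometric_iso Y0 Y1 e0 e1 phi)
  <->
  (exists (eta : Type) (d : eta -> eta -> R) (i0 : X0 -> eta) (i1 : X1 -> eta),
      card_le_sum eta X0 X1 /\ is_metric eta d /\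
      dense_isometry X0 eta d0 d i0 /\ dense_isometry X1 eta d1 d i1).
Proof.
 split.
 - intros (Y0 & e0 & j0 & Y1 & e1 & j1 & phi & [[hm0 _] [iso0 den0]] & [[hm1 _] [iso1 den1]] & [isop surj]).
   set (S := fun y : Y1 => (exists x0, phi (j0 x0) = y) \/ (exists x1, j1 x1 = y)).
   exists {y : Y1 | S y}, (fun a b => e1 (proj1_sig a) (proj1_sig b)).
   exists (fun x => exist S (phi (j0 x)) (or_introl (ex_intro _ x eq_refl))).
   exists (fun x => exist S (j1 x) (or_intror (ex_intro _ x eq_refl))).
   assert (sub_eq : forall a b : {y : Y1 | S y}, proj1_sig a = proj1_sig b -> a = b).
   { intros [a ha] [b hb]. simpl. intros ->. f_equal. apply proof_irrelevance. }
   split; [|split; [|split]].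
   + assert (F : forall a : {y : Y1 | S y}, {s : X0 + X1 |
        match s with inl x => phi (j0 x) = proj1_sig a | inr x => j1 x = proj1_sig a end}).
     { intros [a ha]. simpl.
       destruct (excluded_middle_informative (exists x0, phi (j0 x0) = a)) as [h|h].
       - destruct (constructive_indefinite_description _ h) as [x hx]. exists (inl x). exact hx.
       - assert (h' : exists x1, j1 x1 = a) by (destruct ha; tauto).
         destruct (constructive_indefinite_description _ h') as [x hx]. exists (inr x). exact hx. }
     exists (fun a => proj1_sig (F a)). intros a b hab.
     destruct (F a) as [sa ha], (F b) as [sb hb]. simpl in hab. subst sb.
     apply sub_eq. destruct sa; congruence.
   + destruct hm1 as [h0 [h1 [hs ht]]]. split; [|split; [|split]]; intros; auto.
     split; intro H. * apply sub_eq. apply h1. auto. * subst. apply h1. auto.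
   + split.
     * intros x y. simpl. rewrite isop. apply iso0.
     * intros [y hy] eps he. simpl. destruct (surj y) as [z <-].
       destruct (den0 z eps he) as [x hx]. exists x. rewrite isop. auto.
   + split.
     * intros x y. simpl. apply iso1.
     * intros [y hy] eps he. simpl. apply den1; auto.
 - intros (eta & d & i0 & i1 & _ & hm & den0 & den1).
   exists (CY eta d), (dist eta d), (fun x => jC eta d hm (i0 x)).
   exists (CY eta d), (dist eta d), (fun x => jC eta d hm (i1 x)), (fun y => y).
   split; [|split].
   + split; [apply CY_complete; auto|]. apply (compose_dense _ eta _ d0 d); auto.
     * apply dist_metric; auto.
     * apply jC_dense.
   + split; [apply CY_complete; auto|]. apply (compose_dense _ eta _ d1 d); auto.
     * apply dist_metric; auto.
     * apply jC_dense.
   + split. * intros x y. reflexivity. * intro y. exists y. reflexivity.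
Qed.
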